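(* Let $\beta = (\nu_{1}, \dots, \nu_{n}, \nu_{n}, \dots, \nu_{1}) \in \Lambda_{2n}$ have at least one negative part. Then $\mathrm{meas}(Kp^{\lambda}Kg_{\mu} \cap K'p^{\beta}K') = 0$, the measure being taken in $H$.
   Context: Let $p$ be an odd prime and $a$ prime to $p$ and not a square mod $p$. $G=Gl_{2n}(\mathbb{Q}_p)$, $K=Gl_{2n}(\mathbb{Z}_p)$, and $H\cong Gl_n(\mathbb{Q}_p(\sqrt a))$ is embedded in $G$ as $\{\left(\begin{smallmatrix} i & j\\ a w_n j w_n & w_n i w_n\end{smallmatrix}\right)\in G: i,j\in Gl_n(\mathbb{Q}_p)\}$, where $w_n$ is the $n\times n$ matrix with ones on the antidiagonal; $K'=K\cap H\cong Gl_n(\mathbb{Z}_p(\sqrt a))$. $\lambda$ is a partition with $l(\lambda)\le 2n$, $\mu$ a partition with $l(\mu)\le n$, $p^\lambda=\mathrm{diag}(p^{\lambda_1},\dots,p^{\lambda_{2n}})$ (similarly $p^\beta$), $g_\mu=\mathrm{diag}(1,\dots,1,p^{-\mu_n},\dots,p^{-\mu_1})$, and $\Lambda_{2n}=\{(\beta_1,\dots,\beta_{2n})\in\mathbb{Z}^{2n}:\beta_1\ge\cdots\ge\beta_{2n}\}$. The measure is the Haar measure on $H$ normalized so $K'$ has measure 1. *)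

(* Defs.v *)
From HB Require Import structures.
From mathcomp Require Import all_boot all_order all_algebra.
Set Implicit Arguments. Unset Strict Implicit. Unset Printing Implicit Defensive.
Import Order.TTheory GRing.Theory Num.Theory.
Local Open Scope ring_scope.

(* [ord] is the (normalized) valuation, meaningful on nonzero elements.  *)
(* [val_ge ord x k] means  x = 0  or  v(x) >= k  (i.e. x \in p^k Z_p).   *)
Definition val_ge (F : fieldType) (ord : F -> int) (x : F) (k : int) : bool :=
  (x == 0) || (k <= ord x).

(* F, with valuation ord, is (a model of) the p-adic field Q_p: a complete
   discretely valued field with v(p) = 1 in which Q is dense.  Any such
   valued field is isomorphic to the completion Q_p of Q. *)
Record is_Qp (p : nat) (F : fieldType) (ord : F -> int) : Prop := IsQp {
  Qp_ord_mul : forall x y : F, x != 0 -> y != 0 -> ord (x * y) = ord x + ord y;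
  Qp_ord_add : forall x y : F, x != 0 -> y != 0 -> x + y != 0 ->
                 Num.min (ord x) (ord y) <= ord (x + y);
  Qp_p_neq0 : (p%:R : F) != 0;
  Qp_ord_p : ord (p%:R) = 1;
  Qp_complete : forall u : nat -> F,
      (forall k : int, exists N : nat, forall m n : nat, (N <= m)%N -> (N <= n)%N ->
          val_ge ord (u m - u n) k) ->
      exists l : F, forall k : int, exists N : nat, forall n : nat, (N <= n)%N ->
          val_ge ord (u n - l) k;
  Qp_dense : forall (x : F) (k : int), exists q : rat, val_ge ord (x - ratr q) k
}.

(* K = GL_m(Z_p): invertible matrices with Z_p entries and Z_p-integral inverse *)
Definition inK (F : fieldType) (ord : F -> int) (m : nat) (A : 'M[F]_m) : Prop :=
  A \in unitmx /\ (forall i j, val_ge ord (A i j) 0) /\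
  (forall i j, val_ge ord (invmx A i j) 0).

Definition wmx (F : fieldType) (n : nat) : 'M[F]_n :=
  \matrix_(i < n, j < n) ((i + j)%N == n.-1)%:R.

(* H: the image of GL_n(Q_p(sqrt a)) in GL_{2n}(Q_p) *)
Definition inH (F : fieldType) (a : int) (n : nat) (X : 'M[F]_(n + n)) : Prop :=
  X \in unitmx /\
  exists i j : 'M[F]_n,
    X = block_mx i j (a%:~R *: (wmx F n *m j *m wmx F n)) (wmx F n *m i *m wmx F n).

Definition p_pow_nat (F : fieldType) (p m : nat) (l : 'I_m -> nat) : 'M[F]_m :=
  diag_mx (\row_i ((p%:R : F) ^+ l i)).

Definition p_pow_int (F : fieldType) (p m : nat) (b : 'I_m -> int) : 'M[F]_m :=
  diag_mx (\row_i ((p%:R : F) ^ b i)).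

(* g_mu = diag(1,...,1,p^{-mu_n},...,p^{-mu_1}) ; mu is 0-indexed *)
Definition g_mu (F : fieldType) (p n : nat) (mu : 'I_n -> nat) : 'M[F]_(n + n) :=
  diag_mx (\row_(i < n + n)
     match split i with
     | inl _ => 1
     | inr k => (p%:R : F) ^- mu (rev_ord k)
     end).

Definition beta_of (n : nat) (nu : 'I_n -> int) : 'I_(n + n) -> int :=
  fun i => match split i with
           | inl k => nu k
           | inr k => nu (rev_ord k)
           end.

(* nonincreasing sequences: partitions (nat) and elements of Lambda_m (int) *)
Definition nonincr_nat (m : nat) (f : 'I_m -> nat) : Prop :=
  forall i j : 'I_m, (i <= j)%N -> (f j <= f i)%N.
Definition nonincr_int (m : nat) (f : 'I_m -> int) : Prop :=
  forall i j : 'I_m, (i <= j)%N -> f j <= f i.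

Definition in_KlamKg (F : fieldType) (ord : F -> int) (p n : nat)
    (lam : 'I_(n + n) -> nat) (mu : 'I_n -> nat) (X : 'M[F]_(n + n)) : Prop :=
  exists k1 k2 : 'M[F]_(n + n), inK ord k1 /\ inK ord k2 /\
    X = k1 *m p_pow_nat F p lam *m k2 *m g_mu F p mu.

Definition in_K'betaK' (F : fieldType) (ord : F -> int) (p : nat) (a : int) (n : nat)
    (b : 'I_(n + n) -> int) (X : 'M[F]_(n + n)) : Prop :=
  exists k1 k2 : 'M[F]_(n + n),
    (inK ord k1 /\ inH a k1) /\ (inK ord k2 /\ inH a k2) /\
    X = k1 *m p_pow_int F p b *m k2.

Arguments is_Qp p F ord : clear implicits.

(* Main.v *)
Require Import Defs.
From HB Require Import structures.
From mathcomp Require Import all_boot all_order all_algebra.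
From mathcomp Require Import zify ring lra.
Import Order.TTheory GRing.Theory Num.Theory.
Local Open Scope ring_scope.

Lemma vg_add {p : nat} {F : fieldType} {ord : F -> int} (HQ : is_Qp p F ord)
  {x y : F} {k} : val_ge ord x k -> val_ge ord y k -> val_ge ord (x + y) k.
Proof.
rewrite /val_ge; have [->|x0] := eqVneq x 0; first by rewrite add0r.
have [->|y0] := eqVneq y 0; first by rewrite addr0 (negbTE x0) => h _.
have [s0|s0] := eqVneq (x + y) 0; first by [] || move=> _ _.
move=> /= hx hy.
apply: le_trans (Qp_ord_add HQ x0 y0 s0).
by rewrite le_min hx.
Qed.

Lemma vg_mul {p : nat} {F : fieldType} {ord : F -> int} (HQ : is_Qp p F ord)
  {x y : F} {k l} : val_ge ord x k -> val_ge ord y l -> val_ge ord (x * y) (k + l).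
Proof.
rewrite /val_ge; have [->|x0] := eqVneq x 0; first by rewrite mul0r eqxx.
have [->|y0] := eqVneq y 0; first by rewrite mulr0 eqxx.
rewrite /= mulf_eq0 (negbTE x0) (negbTE y0) /= (Qp_ord_mul HQ x0 y0) => hx hy.
by rewrite lerD.
Qed.

Lemma ord1 {p : nat} {F : fieldType} {ord : F -> int} (HQ : is_Qp p F ord) :
  ord 1 = 0.
Proof.
have := Qp_ord_mul HQ (oner_neq0 F) (oner_neq0 F); rewrite mulr1 => h. move: h; set t := ord 1 => h; lia.
Qed.

Lemma ordN1 {p : nat} {F : fieldType} {ord : F -> int} (HQ : is_Qp p F ord) :
  ord (-1) = 0.
Proof.
have h1 : (-1 : F) != 0 by rewrite oppr_eq0 oner_neq0.
have := Qp_ord_mul HQ h1 h1; rewrite mulrNN mulr1 (ord1 HQ) => h. lia.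
Qed.

Lemma vg_nat {p : nat} {F : fieldType} {ord : F -> int} (HQ : is_Qp p F ord)
  (m : nat) : val_ge ord (m%:R) 0.
Proof.
elim: m => [|m IH]; first by rewrite /val_ge eqxx.
rewrite -addn1 natrD; apply: (vg_add HQ) IH _.
by rewrite /val_ge (ord1 HQ) orbT.
Qed.

Lemma vg_int {p : nat} {F : fieldType} {ord : F -> int} (HQ : is_Qp p F ord)
  (z : int) : val_ge ord (z%:~R) 0.
Proof.
case: z => m; first exact: (vg_nat HQ).
rewrite NegzE mulrNz -mulN1r -[0]add0r.
apply: (vg_mul HQ); first by rewrite /val_ge (ordN1 HQ) orbT.
exact: (vg_nat HQ).
Qed.

Lemma ord_a {p : nat} {F : fieldType} {ord : F -> int} (HQ : is_Qp p F ord)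
  (Hp : prime p) (a : int) (Ha : ~~ (p %| `|a|)%N) :
  (a%:~R : F) != 0 /\ ord (a%:~R) = 0.
Proof.
have : coprimez a p%:Z by rewrite coprimezE /= coprime_sym prime_coprime.
case/coprimezP=> [[u v]] /= huv.
have key : ~~ val_ge ord (a%:~R : F) 1.
  apply/negP=> ha.
  have h1 : val_ge ord (1 : F) 1.
    have -> : (1 : F) = (u * a + v * p%:Z)%:~R by rewrite huv.
    rewrite intrD !intrM; apply: (vg_add HQ).
      by have := vg_mul HQ (vg_int HQ u) ha; rewrite add0r.
    have hp : val_ge ord (p%:Z%:~R : F) 1 by rewrite /val_ge /= Qp_ord_p // orbT.
    by have := vg_mul HQ (vg_int HQ v) hp; rewrite add0r.
  by move: h1; rewrite /val_ge oner_eq0 (ord1 HQ).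
move: key; rewrite /val_ge negb_or => /andP[a0 h]; split=> //.
move: (vg_int HQ a); rewrite /val_ge (negbTE a0) /= => h2.
rewrite -ltNge in h. lia.
Qed.

Definition intmx {F : fieldType} (ord : F -> int) {m n} (A : 'M[F]_(m,n)) :=
  forall i j, val_ge ord (A i j) 0.

Lemma vg0 {F : fieldType} (ord : F -> int) k : val_ge ord 0 k.
Proof. by rewrite /val_ge eqxx. Qed.

Lemma intmx_mul {p : nat} {F : fieldType} {ord : F -> int} (HQ : is_Qp p F ord)
  {m n r} (A : 'M[F]_(m,n)) (B : 'M[F]_(n,r)) :
  intmx ord A -> intmx ord B -> intmx ord (A *m B).
Proof.
move=> hA hB i j; rewrite mxE.
apply: (big_ind (fun x => val_ge ord x 0)) => //; first exact: vg0.
  by move=> x y; apply: (vg_add HQ).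
by move=> k _; have := vg_mul HQ (hA i k) (hB k j); rewrite addr0.
Qed.

Lemma intmx_add {p : nat} {F : fieldType} {ord : F -> int} (HQ : is_Qp p F ord)
  {m n} (A B : 'M[F]_(m,n)) :
  intmx ord A -> intmx ord B -> intmx ord (A + B).
Proof. by move=> hA hB i j; rewrite mxE; apply: (vg_add HQ). Qed.

Lemma intmx0 {F : fieldType} (ord : F -> int) {m n} : intmx ord (0 : 'M[F]_(m,n)).
Proof. by move=> i j; rewrite mxE; apply: vg0. Qed.

Lemma intmx_scale {p : nat} {F : fieldType} {ord : F -> int} (HQ : is_Qp p F ord)
  {m n} c (A : 'M[F]_(m,n)) :
  val_ge ord c 0 -> intmx ord A -> intmx ord (c *: A).
Proof. by move=> hc hA i j; rewrite mxE; have := vg_mul HQ hc (hA i j); rewrite addr0. Qed.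

Lemma intmx_diag {F : fieldType} (ord : F -> int) {n} (d : 'rV[F]_n) :
  (forall i, val_ge ord (d 0 i) 0) -> intmx ord (diag_mx d).
Proof.
move=> hd i j; rewrite mxE; case: eqP => _; last exact: vg0.
by rewrite mulr1n.
Qed.

Lemma intmx_block {F : fieldType} (ord : F -> int) {m1 m2 n1 n2}
  (A : 'M[F]_(m1,n1)) (B : 'M[F]_(m1,n2)) (C : 'M[F]_(m2,n1)) (D : 'M[F]_(m2,n2)) :
  intmx ord A -> intmx ord B -> intmx ord C -> intmx ord D ->
  intmx ord (block_mx A B C D).
Proof.
move=> hA hB hC hD i j; rewrite /block_mx !mxE.
by case: split => k; rewrite !mxE; case: split.
Qed.

Lemma wmx_l {F : fieldType} {n m} (A : 'M[F]_(n,m)) i j :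
  (wmx F n *m A) i j = A (rev_ord i) j.
Proof.
rewrite mxE (bigD1 (rev_ord i)) //= big1 => [|k /negbTE hk].
  rewrite mxE /=.
  have -> : (i + (n - i.+1) == n.-1)%N by apply/eqP; have := ltn_ord i; lia.
  by rewrite mul1r addr0.
rewrite mxE; case: eqP => [h|]; last by rewrite mul0r.
suff : k == rev_ord i by rewrite hk.
apply/eqP/val_inj => /=; have := ltn_ord i; lia.
Qed.

Lemma wmx_r {F : fieldType} {n m} (A : 'M[F]_(m,n)) i j :
  (A *m wmx F n) i j = A i (rev_ord j).
Proof.
rewrite mxE (bigD1 (rev_ord j)) //= big1 => [|k /negbTE hk].
  rewrite mxE /=.
  have -> : ((n - j.+1) + j == n.-1)%N by apply/eqP; have := ltn_ord j; lia.
  by rewrite mulr1 addr0.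
rewrite mxE; case: eqP => [h|]; last by rewrite mulr0.
suff : k == rev_ord j by rewrite hk.
apply/eqP/val_inj => /=; have := ltn_ord j; lia.
Qed.

Lemma wmxK {F : fieldType} {n m} (A : 'M[F]_(n,m)) : wmx F n *m (wmx F n *m A) = A.
Proof. by apply/matrixP=> i j; rewrite !wmx_l rev_ordK. Qed.

Lemma wmxKr {F : fieldType} {n m} (A : 'M[F]_(m,n)) : A *m wmx F n *m wmx F n = A.
Proof. by apply/matrixP=> i j; rewrite !wmx_r rev_ordK. Qed.


Definition Hf {F : fieldType} {n} (c : F) (i j : 'M[F]_n) : 'M[F]_(n + n) :=
  block_mx i j (c *: (wmx F n *m j *m wmx F n)) (wmx F n *m i *m wmx F n).

Ltac mxnorm := do ![rewrite mulmxA | rewrite -scalemxAr | rewrite -scalemxAl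
   | rewrite wmxKr | rewrite mulmxDl | rewrite mulmxDr | rewrite scalerDr].

Lemma Hf_mul {F : fieldType} {n} (c : F) (i j i' j' : 'M[F]_n) :
  Hf c i j *m Hf c i' j' =
  Hf c (i *m i' + c *: (j *m wmx F n *m j' *m wmx F n))
       (i *m j' + j *m wmx F n *m i' *m wmx F n).
Proof.
rewrite /Hf mulmx_block; congr block_mx; mxnorm => //; exact: addrC.
Qed.

Lemma vg_pexp {p : nat} {F : fieldType} {ord : F -> int} (HQ : is_Qp p F ord) k :
  val_ge ord ((p%:R : F) ^+ k) 0.
Proof.
elim: k => [|k IH]; first by rewrite expr0 /val_ge (ord1 HQ) orbT.
by rewrite exprS; have := vg_mul HQ (vg_nat HQ p) IH; rewrite addr0.
Qed.

Lemma ord_pexp {p : nat} {F : fieldType} {ord : F -> int} (HQ : is_Qp p F ord) k :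
  ((p%:R : F) ^+ k != 0) /\ ord ((p%:R : F) ^+ k) = k%:Z.
Proof.
have p0 := Qp_p_neq0 HQ.
elim: k => [|k [h0 IH]]; first by rewrite expr0 oner_neq0 (ord1 HQ).
rewrite exprS mulf_neq0 //; split => //.
by rewrite (Qp_ord_mul HQ p0 h0) IH Qp_ord_p // -addn1 PoszD addrC.
Qed.

Lemma vg_negpow {p : nat} {F : fieldType} {ord : F -> int} (HQ : is_Qp p F ord) (z : int) :
  z < 0 -> ~~ val_ge ord ((p%:R : F) ^ z) 0.
Proof.
case: z => // k _; rewrite /exprz.
have [h0 h] := ord_pexp HQ k.+1.
have hi : ((p%:R : F) ^+ k.+1)^-1 != 0 by rewrite invr_eq0.
have := Qp_ord_mul HQ hi h0; rewrite mulVf // (ord1 HQ) h => e.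
rewrite /val_ge (negbTE hi) /= -ltNge.
move: e; set t := ord _; lia.
Qed.

Lemma vg_unit {p : nat} {F : fieldType} {ord : F -> int} (HQ : is_Qp p F ord) (c x : F) :
  c != 0 -> ord c = 0 -> val_ge ord (c * x) 0 -> val_ge ord x 0.
Proof.
move=> c0 oc; rewrite /val_ge; have [//|x0] := eqVneq x 0.
by rewrite mulf_eq0 (negbTE c0) (negbTE x0) /= (Qp_ord_mul HQ c0 x0) oc add0r.
Qed.

Lemma wconj {F : fieldType} {n} (A : 'M[F]_n) i j :
  (wmx F n *m A *m wmx F n) i j = A (rev_ord i) (rev_ord j).
Proof. by rewrite wmx_r wmx_l. Qed.

Lemma pbeta_eq {p : nat} {F : fieldType} {n} (c : F) (nu : 'I_n -> int) :
  p_pow_int F p (beta_of nu) = Hf c (diag_mx (\row_k ((p%:R : F) ^ nu k))) 0.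
Proof.
rewrite /Hf mulmx0 mul0mx scaler0.
have -> : wmx F n *m diag_mx (\row_k ((p%:R : F) ^ nu k)) *m wmx F n =
          diag_mx (\row_k ((p%:R : F) ^ nu (rev_ord k))).
  apply/matrixP=> i j; rewrite wconj !mxE (inj_eq rev_ord_inj).
  by case: eqP => [->|]; rewrite ?rev_ordK.
rewrite -diag_mx_row /p_pow_int; congr diag_mx; apply/rowP => k.
by rewrite !mxE /beta_of; case: split => l; rewrite mxE.
Qed.

Lemma gmu_eq {p : nat} {F : fieldType} {n} (mu : 'I_n -> nat) :
  g_mu F p mu = block_mx (diag_mx (\row_(k < n) (1 : F)))  0 0
                         (diag_mx (\row_(k < n) ((p%:R : F) ^- mu (rev_ord k)))).
Proof.
rewrite -diag_mx_row /g_mu; congr diag_mx; apply/rowP => k.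
by rewrite !mxE; case: split => l; rewrite mxE.
Qed.

Lemma intmx_ul {F : fieldType} (ord : F -> int) {m1 m2 n1 n2} (A : 'M[F]_(m1 + m2, n1 + n2)) :
  intmx ord A -> intmx ord (ulsubmx A) /\ intmx ord (ursubmx A) /\
                 intmx ord (dlsubmx A) /\ intmx ord (drsubmx A).
Proof. move=> h; split; [|split; [|split]] => i j; rewrite !mxE; apply: h. Qed.

Theorem lemma4p1 (p : nat) (a : int) (n : nat) (F : fieldType) (ord : F -> int)
  (Hp : prime p) (Hodd : odd p) (HQp : is_Qp p F ord)
  (Ha_coprime : ~~ (p %| `|a|)%N)
  (Ha_nonsq : forall x : int, ~ (x ^+ 2 = a %[mod p%:Z])%Z)
  (lam : 'I_(n + n) -> nat) (Hlam : nonincr_nat lam)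
  (mu : 'I_n -> nat) (Hmu : nonincr_nat mu)
  (nu : 'I_n -> int) (Hnu : nonincr_int nu) (Hneg : exists i, nu i < 0) :
  ~ (exists X : 'M[F]_(n + n),
       in_KlamKg ord p lam mu X /\ in_K'betaK' ord p a (beta_of nu) X).
Proof.
move=> [X [[k1 [k2 [hk1 [hk2 eX]]]] [k1' [k2' [[hk1' hH1] [[hk2' hH2] eX']]]]]].
have [c0 oc] := ord_a HQp Hp a Ha_coprime.
set c : F := a%:~R in c0 oc.
case: hH1 => _ [i1 [j1 e1]]; case: hH2 => _ [i2 [j2 e2]].
have e1' : k1' = Hf c i1 j1 by exact: e1.
have e2' : k2' = Hf c i2 j2 by exact: e2.
set D := diag_mx (\row_k ((p%:R : F) ^ nu k)).
have eP : p_pow_int F p (beta_of nu) = Hf c D 0 by apply: pbeta_eq.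
have [I [J eXH]] : exists I J, X = Hf c I J.
  by rewrite eX' e1' e2' eP !Hf_mul; do 2 eexists.
set M := k1 *m p_pow_nat F p lam *m k2.
have hM : intmx ord M.
  apply: (intmx_mul HQp); last exact: hk2.2.1.
  apply: (intmx_mul HQp); first exact: hk1.2.1.
  by apply: intmx_diag => k; rewrite mxE; apply: (vg_pexp HQp).
have [hM1 [hM2 [hM3 hM4]]] := intmx_ul ord _ hM.
move: eX; rewrite -/M gmu_eq -[M]submxK mulmx_block eXH /Hf.
case/eq_block_mx => eI _ eJ _.
have hd1 : intmx ord (diag_mx (\row_(k < n) (1 : F))).
  by apply: intmx_diag => k; rewrite mxE /val_ge (ord1 HQp) orbT.
have hI : intmx ord I.
  rewrite eI; apply: (intmx_add HQp); first exact: (intmx_mul HQp).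
  by rewrite mulmx0; apply: intmx0.
have hcJ : intmx ord (c *: (wmx F n *m J *m wmx F n)).
  rewrite eJ; apply: (intmx_add HQp); first exact: (intmx_mul HQp).
  by rewrite mulmx0; apply: intmx0.
have hJ : intmx ord J.
  move=> r s; apply: (vg_unit HQp _ _ c0 oc).
  by have := hcJ (rev_ord r) (rev_ord s); rewrite mxE wconj !rev_ordK.
have hX : intmx ord X.
  rewrite eXH /Hf; apply: intmx_block => //.
  by move=> r s; rewrite wconj.
have eP2 : p_pow_int F p (beta_of nu) = invmx k1' *m X *m invmx k2'.
  rewrite eX' -!mulmxA mulKmx ?mulmxV ?mulmx1 //; [exact: hk2'.1 | exact: hk1'.1].
have hP : intmx ord (p_pow_int F p (beta_of nu)).
  rewrite eP2; apply: (intmx_mul HQp); last exact: hk2'.2.2.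
  apply: (intmx_mul HQp) hX; exact: hk1'.2.2.
case: Hneg => i0 hi0.
have := hP (lshift n i0) (lshift n i0).
rewrite mxE eqxx mulr1n mxE /beta_of.
case: splitP => [k hk|k hk].
  have -> : k = i0 by apply: val_inj; rewrite /= -hk.
  by apply/negP; apply: (vg_negpow HQp).
by exfalso; move: hk; rewrite /= => hk; have := ltn_ord i0; lia.
Qed.
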